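(* For every tree $T$, $\mathrm{opt}(T)=\mathsf{vc}(T)$; moreover, the simple protocol in which exactly the vertices of a minimum vertex cover of $T$ broadcast their entire input solves the multiparty equality problem and is optimal.
   Context: Multiparty equality in the local broadcast model: $G$ is a connected graph and $k$ a positive integer; every vertex $v$ receives an input $\lambda(v)\in\{0,1\}^k$. Vertices communicate by broadcasting messages; a message broadcast by a vertex is received by all of its neighbours, and its number of bits is counted once. Protocols are deterministic and static: which vertices send messages and the message lengths depend only on $G$ and $k$, while message contents may depend on inputs. At the end every vertex accepts or rejects; the protocol solves the problem if all vertices accept when all inputs are equal and at least one vertex rejects when two inputs differ. Total cost = sum over vertices of the number of bits broadcast; $\mathrm{opt}(G,k)$ is the minimum total cost of a solving protocol and $\mathrm{opt}(G)=\lim_{k\to\infty}\mathrm{opt}(G,k)/k$. A simple protocol is one in which each vertex of a fixed set $S$ broadcasts its whole input and all other vertices are silent, and each vertex accepts iff every input it received equals its own input; its per-bit cost is $|S|$. $\mathsf{vc}(T)$ is the minimum size of a vertex cover of $T$. *)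

(* Defs.v *)
From Stdlib Require Import Reals ClassicalEpsilon.
From mathcomp Require Import all_boot.

Set Implicit Arguments.
Unset Strict Implicit.
Unset Printing Implicit Defensive.

Section Model.
Variable V : finType.
Variable e : rel V.

Definition graph_connected : Prop := forall u v : V, connect e u v.

Definition is_tree : Prop :=
  graph_connected /\
  forall (x : V) (p : seq V),
    path e x p -> uniq (x :: p) -> 2 <= size p -> ~~ e (last x p) x.

Definition is_vertex_cover (S : {set V}) : bool :=
  [forall u, forall v, e u v ==> (u \in S) || (v \in S)].

Definition vc : nat :=
  \big[minn/#|V|]_(S : {set V} | is_vertex_cover S) #|S|.

Definition min_vertex_cover (S : {set V}) : Prop :=
  is_vertex_cover S /\ #|S| = vc.

(* A deterministic static protocol for inputs in {0,1}^k.
   [sched] is the fixed sequence of broadcasts (sender, number of bits);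
   it depends only on the graph and k.  The content of the t-th message is
   computed by [msgf t v] from the sender's input and its view (all messages
   it received so far); the final decision of each vertex is computed by
   [decide] from its input and its final view. *)
Record protocol (k : nat) := Protocol {
  sched : seq (V * nat);
  msgf : nat -> V -> k.-tuple bool -> seq (option bitseq) -> bitseq;
  decide : V -> k.-tuple bool -> seq (option bitseq) -> bool }.

Definition fit (l : nat) (m : bitseq) : bitseq := take l m ++ nseq (l - size m) false.

(* view of vertex w of a transcript: the i-th entry is the i-th message if
   w is a neighbour of its sender (so it received it), None otherwise *)
Definition view (w : V) (tr : seq (V * bitseq)) : seq (option bitseq) :=
  [seq if e u.1 w then Some u.2 else None | u <- tr].

Section Run.
Variables (k : nat) (P : protocol k) (lam : V -> k.-tuple bool).

Fixpoint run (s : seq (V * nat)) (t : nat) (tr : seq (V * bitseq)) :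
    seq (V * bitseq) :=
  match s with
  | [::] => tr
  | (v, l) :: s' =>
      run s' t.+1 (rcons tr (v, fit l (msgf P t v (lam v) (view v tr))))
  end.

Definition transcript : seq (V * bitseq) := run (sched P) 0 [::].

Definition accepts (v : V) : bool := decide P v (lam v) (view v transcript).
End Run.

Definition cost k (P : protocol k) : nat := sumn (map snd (sched P)).

Definition solves k (P : protocol k) : Prop :=
  (forall lam : V -> k.-tuple bool,
      (forall u v, lam u = lam v) -> forall v, accepts P lam v) /\
  (forall lam : V -> k.-tuple bool,
      (exists u v, lam u <> lam v) -> exists v, ~~ accepts P lam v).

Definition is_opt (k c : nat) : Prop :=
  (exists P : protocol k, solves P /\ cost P = c) /\
  (forall P : protocol k, solves P -> c <= cost P).

Definition opt_k (k : nat) : nat := epsilon (inhabits 0) (is_opt k).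

Definition simple_protocol (S : {set V}) (k : nat) : protocol k :=
  Protocol [seq (v, k) | v <- enum S]
    (fun _ _ x _ => val x)
    (fun _ x vw => all (fun o => if o is Some m then m == val x else true) vw).

End Model.

(* Main.v *)
Require Import Defs.
From Stdlib Require Import Reals ClassicalEpsilon.
From mathcomp Require Import all_boot.
Set Implicit Arguments. Unset Strict Implicit. Unset Printing Implicit Defensive.

Section G.
Variable V : finType.
Variable e : rel V.
Hypothesis e_sym : symmetric e.
Hypothesis e_irr : irreflexive e.
Hypothesis T_tree : is_tree e.

Lemma vc_le S : is_vertex_cover e S -> vc e <= #|S|.
Proof.
move=> hS; rewrite /vc.
have : S \in index_enum {set V} by rewrite mem_index_enum.
elim: (index_enum _) => [//|a r IH]; rewrite inE big_cons.
case/orP=> [/eqP <-|/IH h]; first by rewrite hS geq_minl.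
by case: ifP => // _; rewrite geq_min h orbT.
Qed.

Lemma vc_ex : exists S, min_vertex_cover e S.
Proof.
have : exists S, is_vertex_cover e S /\ #|S| = vc e.
  rewrite /vc; apply: (big_ind (fun n => exists S, is_vertex_cover e S /\ #|S| = n)).
  - exists setT; split; last by rewrite cardsT.
    by apply/forallP=> u; apply/forallP=> v; apply/implyP=> _; rewrite in_setT.
  - move=> a b [Sa [ca ea]] [Sb [cb eb]]; rewrite /minn; case: ifP => _.
      by exists Sa. by exists Sb.
  - by move=> S hS; exists S.
by [].
Qed.

Lemma leaf_ex (W : {set V}) a b : a \in W -> b \in W -> e a b ->
  exists l p, [/\ l \in W, p \in W, e l p & forall z, z \in W -> e l z -> z = p].
Proof.
move=> aW bW eab.
pose P n := [exists x, exists q : n.-tuple V, [&& x \in W, all (mem W) q, path e x q & uniq (x :: q)]].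
have P1 : P 1.
  apply/existsP; exists a; apply/existsP; exists [tuple b].
  rewrite /= aW bW eab /= inE andbT; apply/eqP=> ab; subst b; by rewrite e_irr in eab.
have Pb n : P n -> n <= #|V|.
  case/existsP=> x /existsP [q /and4P [_ _ _ u]].
  have := uniq_leq_size u (fun y _ => mem_enum V y). rewrite /= size_tuple.
  by rewrite -cardT => /ltnW.
have ex : exists n, P n by exists 1.
case: (ex_maxnP ex Pb) => N PN maxN.
case/existsP: PN => x /existsP [q /and4P [xW qW pq uq]].
case Eq: (val q) pq qW uq => [|p q'] //.
  by have := maxN 1 P1; rewrite -(size_tuple q) Eq.
move=> /= /andP [exp pq'] /andP [pW q'W] uq.
exists x, p; split => // z zW exz.
case: (z =P p) => // zp; exfalso.
case zin: (z \in x :: p :: q').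
  rewrite inE in zin; case/orP: zin => [/eqP zx|].
    by subst z; rewrite e_irr in exz.
  rewrite inE; case/orP => [/eqP //|zq'].
  pose i := index z q'.
  pose r := take i.+2 (p :: q').
  have hlast : last x r = z.
    rewrite /r (last_nth x) /= size_take /=.
    have hi : i < size q' by rewrite index_mem.
    case: ifP => h; last first.
      have -> : size q' = i.+1 by apply/eqP; rewrite eqn_leq hi andbT leqNgt h.
    all: rewrite /= ?nth_take // ?nth_index //.
  have := (proj2 T_tree) x r.
  have hp : path e x r.
    have : path e x (p :: q') by rewrite /= exp pq'.
    by rewrite -(cat_take_drop i.+2 (p :: q')) cat_path => /andP [].
  have hu : uniq (x :: r).
    have uq' : uniq (x :: p :: q') by [].
    by have := take_uniq i.+3 uq'.
  have hs : 2 <= size r.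
    rewrite /r size_take /=; case: ifP => //; rewrite ltnS => h.
    by case: (q') zq' h => //.
  by move/(_ hp hu hs); rewrite hlast e_sym exz.
have := maxN N.+1.
have -> : P N.+1.
  apply/existsP; exists z; apply/existsP.
  have hs : size (x :: q) == N.+1 by rewrite /= size_tuple.
  exists (Tuple hs); rewrite /= Eq /= zW xW pW q'W e_sym exz exp pq' /=.
  rewrite zin /=; by [].
by rewrite ltnn => /(_ isT).
Qed.

Lemma cover_weight (k : nat) (c : V -> nat) :
  (forall a b, e a b -> k <= c a + c b) -> k * vc e <= \sum_w c w.
Proof.
move=> hc.
suff H : forall n (W : {set V}), #|W| <= n -> exists S : {set V},
   (forall a b, a \in W -> b \in W -> e a b -> (a \in S) || (b \in S)) /\
   k * #|S| <= \sum_(w in W) c w.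
  have [S [hS hk]] := H #|V| setT (max_card _).
  have cS : is_vertex_cover e S.
    by apply/forallP=> a; apply/forallP=> b; apply/implyP; apply: hS; rewrite in_setT.
  apply: leq_trans (leq_mul (leqnn k) (vc_le cS)) _.
  apply: leq_trans hk _; by rewrite (eq_bigl xpredT) // => w; rewrite in_setT.
elim=> [|n IH] W hW.
  exists set0; split.
    by move: hW; rewrite leqn0 => /eqP/cards0_eq -> a b; rewrite inE.
  by rewrite cards0 muln0.
case: (boolP [exists a, exists b, [&& a \in W, b \in W & e a b]]) => [|hno].
  case/existsP=> a /existsP [b /and3P [aW bW eab]].
  have [l [p [lW pW elp hl]]] := leaf_ex aW bW eab.
  have lp : l != p by apply/eqP=> lp; subst p; rewrite e_irr in elp.
  set W' := W :\ l :\ p.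
  have hW' : #|W'| <= n.
    rewrite /W' -ltnS; apply: leq_trans hW.
    rewrite (cardsD1 p W) (cardsD1 l (W :\ p)) !inE pW lW (negbTE lp) /=.
    rewrite add1n ltnS add1n leqW // setDDl setUC -setDDl; by [].
  have [S' [hS' hk']] := IH W' hW'.
  exists (p |: S'); split.
    move=> x y xW yW exy; rewrite !inE.
    case: (x =P p) => [//|xp]; case: (y =P p) => [_|yp]; first by rewrite orbT.
    case: (x =P l) => [xl|xl].
      by subst x; exfalso; apply: yp; apply: hl.
    case: (y =P l) => [yl|yl].
      by subst y; exfalso; apply: xp; apply: hl => //; rewrite e_sym.
    apply: hS' => //; rewrite /W' !inE ?xW ?yW andbT.
      by apply/andP; split; apply/eqP.
    by apply/andP; split; apply/eqP.
  rewrite (bigD1 p) //= (bigD1 l) /=; last by rewrite lW lp.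
  rewrite addnA mulnC.
  have hcard : #|p |: S'| <= 1 + #|S'| by rewrite cardsU1 leq_add2r leq_b1.
  apply: leq_trans (leq_mul hcard (leqnn k)) _.
  rewrite mulnDl mul1n; apply: leq_add; first by rewrite addnC; apply: hc.
  rewrite mulnC; apply: leq_trans hk' _.
  rewrite (eq_bigl (fun w => (w \in W) && (w != p) && (w != l))) //.
  by move=> w; rewrite /W' !inE; case: (w \in W); case: (w == p); case: (w == l).
exists set0; split; last by rewrite cards0 muln0.
move=> a b aW bW eab; exfalso; move: hno; rewrite negb_exists => /forallP /(_ a).
rewrite negb_exists => /forallP /(_ b); by rewrite aW bW eab.
Qed.

Lemma size_fit l m : size (fit l m) = l.
Proof.
rewrite /fit size_cat size_take size_nseq.
case: ltnP => h; last by rewrite subnKC.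
by have := ltnW h; rewrite -subn_eq0 => /eqP ->; rewrite addn0.
Qed.

Section R.
Variables (k : nat) (P : protocol V k).

Lemma run_prefix lam s t tr : exists r, run e P lam s t tr = tr ++ r.
Proof.
elim: s t tr => [|[w l] s IH] t tr /=; first by exists [::]; rewrite cats0.
have [r ->] := IH t.+1 (rcons tr (w, fit l (msgf P t w (lam w) (view e w tr)))).
by eexists; rewrite cat_rcons.
Qed.

Lemma run_shape lam s t tr :
  [seq (m.1, size m.2) | m <- run e P lam s t tr] = [seq (m.1, size m.2) | m <- tr] ++ s.
Proof.
elim: s t tr => [|[w l] s IH] t tr /=; first by rewrite cats0.
by rewrite IH map_rcons /= size_fit cat_rcons.
Qed.

Lemma transcript_shape lam : [seq (m.1, size m.2) | m <- transcript e P lam] = sched P.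
Proof. by rewrite /transcript run_shape. Qed.

Definition cw (w : V) := sumn [seq p.2 | p <- sched P & p.1 == w].

Lemma cost_sum : cost P = \sum_w cw w.
Proof.
rewrite /cost /cw; elim: (sched P) => [|[a l] s IH].
  by rewrite big1.
rewrite (eq_bigr (fun w => (if a == w then l else 0) + sumn [seq p.2 | p <- s & p.1 == w])); last first.
  by move=> w _ /=; case: (a == w).
rewrite big_split /= -IH (bigD1 a) //= eqxx big1 ?addn0 //.
by move=> w /negbTE; rewrite eq_sym => ->.
Qed.

(* the rectangle argument *)
Variables (A : {set V}) (u v : V).
Hypothesis cross : forall a b, e a b -> a \in A -> b \notin A -> (a == u) && (b == v).
Variables (x y : k.-tuple bool).
Let lam1 := fun _ : V => x.
Let lam2 := fun _ : V => y.
Let lam3 := fun w : V => if w \in A then x else y.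
Let uv (w : V) := (w == u) || (w == v).

Fixpoint good (l1 l2 l3 : seq (V * bitseq)) : Prop :=
  match l1, l2, l3 with
  | a1 :: r1, a2 :: r2, a3 :: r3 =>
     [/\ a2.1 = a1.1, a3.1 = a1.1, a3.2 = (if a1.1 \in A then a1.2 else a2.2),
         (uv a1.1 -> a1.2 = a2.2) & good r1 r2 r3]
  | [::], [::], [::] => True
  | _, _, _ => False
  end.

Lemma good_view l1 l2 l3 w : good l1 l2 l3 ->
  view e w l3 = if w \in A then view e w l1 else view e w l2.
Proof.
elim: l1 l2 l3 => [|[s1 m1] r1 IH] [|[s2 m2] r2] [|[s3 m3] r3] //=.
  by case: ifP.
move=> [-> -> -> huv /IH ->].
case wA: (w \in A); case sA: (s1 \in A) => //.
- case es: (e s1 w) => //; congr (Some _ :: _); apply/esym/huv.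
  have es' : e w s1 by rewrite e_sym.
  by case/andP: (cross es' wA (negbT sA)) => _ hs; rewrite /uv hs orbT.
- case es: (e s1 w) => //; congr (Some _ :: _); apply: huv.
  by case/andP: (cross es sA (negbT wA)) => hs _; rewrite /uv hs.
Qed.
Lemma good_fst l1 l2 l3 : good l1 l2 l3 ->
  map fst l2 = map fst l1 /\ map fst l3 = map fst l1.
Proof.
elim: l1 l2 l3 => [|[s1 m1] r1 IH] [|[s2 m2] r2] [|[s3 m3] r3] //=.
by move=> [/= -> -> _ _ /IH [-> ->]].
Qed.

Lemma good_rcons l1 l2 l3 w m1 m2 m3 : good l1 l2 l3 ->
  m3 = (if w \in A then m1 else m2) -> (uv w -> m1 = m2) ->
  good (rcons l1 (w, m1)) (rcons l2 (w, m2)) (rcons l3 (w, m3)).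
Proof.
elim: l1 l2 l3 => [|[s1 m1'] r1 IH] [|[s2 m2'] r2] [|[s3 m3'] r3] //=.
by move=> [-> -> -> h /IH g] hm huv; split => //; apply: g.
Qed.

Definition msgs (r : seq (V * bitseq)) := [seq m.2 | m <- r & uv m.1].

Lemma msgs_prefix l1 l2 r1 r2 : map fst l1 = map fst l2 ->
  msgs (l1 ++ r1) = msgs (l2 ++ r2) -> msgs l1 = msgs l2.
Proof.
move=> hf; rewrite /msgs !filter_cat !map_cat => /eqP; rewrite eqseq_cat.
  by case/andP => /eqP.
rewrite !size_map !size_filter.
have -> : count (fun m : V * bitseq => uv m.1) l1 = count uv (map fst l1) by rewrite count_map.
by rewrite hf count_map.
Qed.

Lemma good_run s t tr1 tr2 tr3 : good tr1 tr2 tr3 ->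
  msgs (run e P lam1 s t tr1) = msgs (run e P lam2 s t tr2) ->
  good (run e P lam1 s t tr1) (run e P lam2 s t tr2) (run e P lam3 s t tr3).
Proof.
elim: s t tr1 tr2 tr3 => [|[w l] s IH] t tr1 tr2 tr3 //= g hm.
move: (hm) => hm0; apply: IH hm0; apply: good_rcons => //.
  rewrite /lam1 /lam2 /lam3 (good_view w g); by case: (w \in A).
move=> huv.
have [r1 e1] := run_prefix lam1 s t.+1 (rcons tr1 (w, fit l (msgf P t w (lam1 w) (view e w tr1)))).
have [r2 e2] := run_prefix lam2 s t.+1 (rcons tr2 (w, fit l (msgf P t w (lam2 w) (view e w tr2)))).
move: hm; rewrite e1 e2 => /msgs_prefix.
rewrite !map_rcons (proj1 (good_fst g)) => /(_ erefl).
rewrite /msgs !filter_rcons huv !map_rcons => /rcons_inj [_ ->] //.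
Qed.

Lemma good_transcript : msgs (transcript e P lam1) = msgs (transcript e P lam2) ->
  forall w, accepts e P lam3 w = if w \in A then accepts e P lam1 w else accepts e P lam2 w.
Proof.
move=> hm w; have g := @good_run (sched P) 0 [::] [::] [::] I hm.
rewrite /accepts -/(transcript e P lam3) (good_view w g) /lam3 /lam1 /lam2.
by case: (w \in A).
Qed.

End R.
Lemma flatten_inj (s1 s2 : seq bitseq) : map size s1 = map size s2 ->
  flatten s1 = flatten s2 -> s1 = s2.
Proof.
elim: s1 s2 => [|a s1 IH] [|b s2] //= [hab hs] h.
move: h => /eqP; rewrite eqseq_cat ?hab // => /andP [/eqP -> /eqP /(IH _ hs) ->] //.
Qed.

Lemma sumn_filter_or (s : seq (V * nat)) u v : u != v ->
  sumn [seq p.2 | p <- s & (p.1 == u) || (p.1 == v)] =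
  sumn [seq p.2 | p <- s & p.1 == u] + sumn [seq p.2 | p <- s & p.1 == v].
Proof.
move=> uv; elim: s => [|[a l] s IH] //=.
case: (a =P u) => [->|au] /=.
  by rewrite (negbTE uv) /= IH addnA.
case: (a =P v) => [->|av] /=; last by [].
by rewrite IH addnCA.
Qed.

Lemma edge_bound k (P : protocol V k) (A : {set V}) u v :
  (forall a b, e a b -> a \in A -> b \notin A -> (a == u) && (b == v)) ->
  u \in A -> v \notin A -> solves e P -> k <= cw P u + cw P v.
Proof.
move=> cross uA vA [sol1 sol2].
have uv : u != v by apply/eqP => h; rewrite -h uA in vA.
rewrite -sumn_filter_or //.
set L := sumn _.
pose F (x : k.-tuple bool) := flatten (msgs u v (transcript e P (fun _ => x))).
have shapeF x : map size (msgs u v (transcript e P (fun _ => x))) =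
    [seq p.2 | p <- sched P & (p.1 == u) || (p.1 == v)].
  rewrite -(transcript_shape P (fun _ => x)) /msgs filter_map -!map_comp.
  by apply: eq_map.
have sizeF x : size (F x) == L by rewrite size_flatten /shape shapeF.
pose G x : L.-tuple bool := Tuple (sizeF x).
have Ginj : injective G.
  move=> x y /(congr1 val) /= hF.
  have hm := flatten_inj (etrans (shapeF x) (esym (shapeF y))) hF.
  case: (eqVneq x y) => // xy; exfalso.
  have ht := good_transcript cross hm.
  have [|w hw] := sol2 (fun w => if w \in A then x else y).
    by exists u, v; rewrite uA (negbTE vA); exact/eqP.
  move: hw; rewrite ht.
  by case: (w \in A); rewrite (sol1 _ _ w).
have := leq_card G Ginj; rewrite !card_tuple card_bool leq_exp2l //.
Qed.


Lemma tree_edge k (P : protocol V k) u v : solves e P -> e u v -> k <= cw P u + cw P v.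
Proof.
move=> sol euv.
pose e' := fun a b => e a b && ~~ (((a == u) && (b == v)) || ((a == v) && (b == u))).
pose A := [set w | connect e' u w].
have uA : u \in A by rewrite inE connect0.
have vA : v \notin A.
  rewrite inE; apply/negP => /connectP [p pp vl].
  move: vl; case: (shortenP pp) => p' pp' up' _ lp'.
  have hp : path e u p' by apply: sub_path pp' => a b /andP [].
  case Ep: p' pp' lp' up' hp => [|b [|c q]] /=.
  - by move=> _ hv; rewrite -hv e_irr in euv.
  - rewrite !andbT => h hv; subst b; move: h; by rewrite /e' !eqxx andbF.
  move=> _ lp up hp.
  have := (proj2 T_tree) u (b :: c :: q) hp up isT.
  by rewrite /= -lp e_sym euv.
apply: (edge_bound (A := A)) => // a b eab aA bA.
case h : (e' a b).
  exfalso; move: bA; rewrite inE; move: aA; rewrite inE => aA.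
  by rewrite (connect_trans aA (connect1 h)).
move: h; rewrite /e' eab /= => /negbFE /orP [//|/andP [/eqP av _]].
by subst a; rewrite aA in vA.
Qed.

Lemma lower_bound k (P : protocol V k) : solves e P -> k * vc e <= cost P.
Proof.
move=> sol; rewrite cost_sum; apply: cover_weight => a b eab.
exact: tree_edge.
Qed.

Lemma simple_transcript (S : {set V}) k lam :
  transcript e (simple_protocol S k) lam = [seq (w, val (lam w)) | w <- enum S].
Proof.
rewrite /transcript /=.
have H : forall s t tr, run e (simple_protocol S k) lam [seq (w, k) | w <- s] t tr =
   tr ++ [seq (w, val (lam w)) | w <- s].
  elim=> [|w s IH] t tr /=; first by rewrite cats0.
  rewrite IH cat_rcons; congr (_ ++ (_, _) :: _).
  have hs := size_tuple (lam w).
  by rewrite /fit -{1}hs take_size hs subnn cats0.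
by rewrite H.
Qed.

Lemma simple_cost (S : {set V}) k : cost (simple_protocol S k) = #|S| * k.
Proof.
rewrite /cost /= cardE; elim: (enum S) => [|w s IH] //=.
by rewrite IH mulSn.
Qed.

Lemma simple_solves (S : {set V}) k : is_vertex_cover e S -> solves e (simple_protocol S k).
Proof.
move=> cS; split.
  move=> lam heq w; rewrite /accepts /= simple_transcript /view -map_comp.
  apply/allP => o /mapP [w' _ ->] /=; case: (e w' w) => //=.
  by rewrite (heq w' w).
move=> lam [u0 [v0 hne]].
have : exists a b, e a b /\ lam a <> lam b.
  have := (proj1 T_tree) u0 v0 => /connectP [p pp vl].
  elim: p u0 pp vl hne => [|b p IH] a /=.
    by move=> _ -> .
  case/andP=> eab pp vl hne.
  case: (eqVneq (lam a) (lam b)) => [hab|hab].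
    by apply: (IH b pp vl); rewrite -hab.
  by exists a, b; split => //; apply/eqP.
move=> [a [b [eab hab]]].
have hrej : forall s r, s \in S -> e s r -> lam s <> lam r -> ~~ accepts e (simple_protocol S k) lam r.
  move=> s r sS esr hsr; rewrite /accepts /= simple_transcript /view -map_comp.
  apply/allPn; exists (Some (val (lam s))).
    by apply/mapP; exists s; rewrite ?mem_enum //= esr.
  by rewrite /=; apply/negP => /eqP /val_inj.
have := forallP cS a => /forallP /(_ b) /implyP /(_ eab) /orP [aS|bS].
  by exists b; apply: (hrej a).
by exists a; apply: (hrej b) => //; [rewrite e_sym | move=> h; apply: hab].
Qed.

Lemma opt_k_eq k : opt_k e k = vc e * k.
Proof.
have [S [cS hS]] := vc_ex.
have hopt : is_opt e k (vc e * k).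
  split; first by exists (simple_protocol S k); split; [exact: simple_solves | rewrite simple_cost hS].
  by move=> P sol; rewrite mulnC; exact: lower_bound.
have := epsilon_spec (inhabits 0) (is_opt e k) (ex_intro _ _ hopt).
rewrite -/(opt_k e k) => [[[P [sP cP]] hmin]].
apply/eqP; rewrite eqn_leq; apply/andP; split.
  by rewrite -hS -simple_cost; apply: hmin; exact: simple_solves cS.
by rewrite -cP; apply: (proj2 hopt).
Qed.

Lemma cv_vc : Un_cv (fun k => Rdiv (INR (opt_k e k)) (INR k)) (INR (vc e)).
Proof.
move=> eps heps; exists 1%nat => n hn.
rewrite opt_k_eq mult_INR /R_dist.
have hn0 : INR n <> R0 by apply: not_0_INR; move=> h; subst n; inversion hn.
have -> : (Rminus (Rdiv (Rmult (INR (vc e)) (INR n)) (INR n)) (INR (vc e)) = R0) by field.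
by rewrite Rabs_R0.
Qed.
End G.

Theorem theorem3p1 (V : finType) (e : rel V)
    (e_sym : symmetric e) (e_irr : irreflexive e) (T_tree : is_tree e) :
  Un_cv (fun k => Rdiv (INR (opt_k e k)) (INR k)) (INR (vc e)) /\
  (forall S : {set V}, min_vertex_cover e S ->
     (forall k : nat, solves e (simple_protocol S k)) /\
     Un_cv (fun k => Rdiv (INR (opt_k e k)) (INR k)) (INR #|S|)).
Proof.
split; first exact: cv_vc.
move=> S [cS hS]; split; first by move=> k; exact: simple_solves.
rewrite hS; exact: cv_vc.
Qed.
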